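(* Let $Q$ be a finite quiver with an automorphism $\mathfrak a$ and $k$ a field. Every ii-representation $X$ of $(Q,\mathfrak a)$ is isomorphic to a finite direct sum $Y_1\oplus\dots\oplus Y_m$ of ii-indecomposables, and this decomposition is unique up to isomorphism and reordering of the summands (Krull–Remak–Schmidt theorem for ii-representations).
   Context: For a finite-dimensional representation $X$ of $Q$ over $k$, ${}^{\mathfrak a}X$ is defined by $({}^{\mathfrak a}X)_i=X_{\mathfrak a^{-1}(i)}$ and $({}^{\mathfrak a}X)_\rho=X_{\mathfrak a^{-1}(\rho)}$. $X$ is an ii-representation if ${}^{\mathfrak a}X\cong X$; it is an ii-indecomposable if it is a nonzero ii-representation not isomorphic to a direct sum of two nonzero ii-representations. *)

(* Defs.v *)
From HB Require Import structures.
From mathcomp Require Import all_boot all_order all_algebra.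
Set Implicit Arguments. Unset Strict Implicit. Unset Printing Implicit Defensive.
Import GRing.Theory.
Local Open Scope ring_scope.

Section Quiver.
Variables (V A : finType) (s t : A -> V).

Record qaut := QAut {
  av : V -> V; aa : A -> A; avi : V -> V; aai : A -> A;
  avK : cancel av avi; aviK : cancel avi av;
  aaK : cancel aa aai; aaiK : cancel aai aa;
  aa_s : forall r, s (aa r) = av (s r);
  aa_t : forall r, t (aa r) = av (t r) }.

Lemma aai_s (a : qaut) r : s (aai a r) = avi a (s r).
Proof. by rewrite -{2}(aaiK a r) aa_s avK. Qed.
Lemma aai_t (a : qaut) r : t (aai a r) = avi a (t r).
Proof. by rewrite -{2}(aaiK a r) aa_t avK. Qed.

Variable k : fieldType.

(* Finite-dimensional representation: X_i = k^(rdim i) (row vectors),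
   X_rho : X_(s rho) -> X_(t rho) acting by x |-> x *m rmap rho. *)
Record rep := Rep { rdim : V -> nat;
                    rmap : forall r : A, 'M[k]_(rdim (s r), rdim (t r)) }.

(* Twisted representation ^a X: (^aX)_i = X_(a^-1 i), (^aX)_rho = X_(a^-1 rho). *)
Definition twist (a : qaut) (X : rep) : rep :=
  @Rep (fun i => rdim X (avi a i))
       (fun r => castmx (congr1 (rdim X) (aai_s a r), congr1 (rdim X) (aai_t a r))
                        (rmap X (aai a r))).

Definition is_hom (X Y : rep) (f : forall i, 'M[k]_(rdim X i, rdim Y i)) :=
  forall r, rmap X r *m f (t r) = f (s r) *m rmap Y r.

Definition rep_iso (X Y : rep) : Prop :=
  exists (f : forall i, 'M[k]_(rdim X i, rdim Y i))
         (g : forall i, 'M[k]_(rdim Y i, rdim X i)),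
    is_hom f /\ forall i, f i *m g i = 1%:M /\ g i *m f i = 1%:M.

Definition rzero : rep := @Rep (fun _ => 0%N) (fun _ => 0).

Definition rsum (X Y : rep) : rep :=
  @Rep (fun i => (rdim X i + rdim Y i)%N)
       (fun r => block_mx (rmap X r) 0 0 (rmap Y r)).

Definition bigsum m (Y : 'I_m -> rep) : rep :=
  foldr rsum rzero [seq Y i | i <- enum 'I_m].

Definition rep_nonzero (X : rep) : Prop := exists i, rdim X i <> 0%N.

Definition ii_rep (a : qaut) (X : rep) : Prop := rep_iso (twist a X) X.

Definition ii_indec (a : qaut) (X : rep) : Prop :=
  [/\ rep_nonzero X, ii_rep a X &
      ~ exists Y Z, [/\ rep_nonzero Y, rep_nonzero Z, ii_rep a Y, ii_rep a Z &
                        rep_iso X (rsum Y Z)]].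

End Quiver.

(* Main.v *)
Require Import Defs.
From Stdlib Require Import Permutation.
From mathcomp Require Import all_boot all_order all_algebra.
From Stdlib Require Import Classical.
Set Implicit Arguments. Unset Strict Implicit. Unset Printing Implicit Defensive.
Import GRing.Theory.
Local Open Scope ring_scope.

Section KRS.
Variables (V A : finType) (s t : A -> V) (k : fieldType).
Local Notation rp := (rep s t k).
Local Notation hom X Y f := (@is_hom V A s t k X Y f).
Local Notation iso := (@rep_iso V A s t k).

Lemma hom_id (X : rp) : hom X X (fun i => 1%:M).
Proof. by move=> r; rewrite mulmx1 mul1mx. Qed.

Lemma hom_comp (X Y Z : rp) f g : hom X Y f -> hom Y Z g ->
  hom X Z (fun i => f i *m g i).
Proof. by move=> hf hg r; rewrite mulmxA hf -!mulmxA hg. Qed.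

Lemma hom_add (X Y : rp) f g : hom X Y f -> hom X Y g ->
  hom X Y (fun i => f i + g i).
Proof. by move=> hf hg r; rewrite mulmxDr mulmxDl hf hg. Qed.

Lemma hom_opp (X Y : rp) f : hom X Y f -> hom X Y (fun i => - f i).
Proof. by move=> hf r; rewrite mulmxN mulNmx hf. Qed.

Lemma hom_sub (X Y : rp) f g : hom X Y f -> hom X Y g ->
  hom X Y (fun i => f i - g i).
Proof. by move=> hf hg; apply: hom_add => //; apply: hom_opp. Qed.

Lemma hom0 (X Y : rp) : hom X Y (fun i => 0).
Proof. by move=> r; rewrite mulmx0 mul0mx. Qed.

Lemma hom_inv (X Y : rp) f g : hom X Y f ->
  (forall i, f i *m g i = 1%:M) -> (forall i, g i *m f i = 1%:M) -> hom Y X g.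
Proof.
move=> hf fg gf r.
rewrite -[LHS]mul1mx -(gf (s r)) -!mulmxA; congr (_ *m _).
by rewrite !mulmxA -hf -mulmxA fg mulmx1.
Qed.

Lemma hom_invmx (X : rp) f : hom X X f -> (forall i, f i \in unitmx) ->
  hom X X (fun i => invmx (f i)).
Proof.
by move=> hf u; apply: (hom_inv hf) => i; rewrite ?mulmxV ?mulVmx.
Qed.

Lemma iso_refl (X : rp) : iso X X.
Proof. by exists (fun i => 1%:M), (fun i => 1%:M); split=> [|i]; rewrite ?mulmx1 //; apply: hom_id. Qed.

Lemma iso_sym (X Y : rp) : iso X Y -> iso Y X.
Proof.
case=> f [g [hf fg]]; exists g, f; split; last by move=> i; case: (fg i).
by apply: (hom_inv hf) => i; case: (fg i).
Qed.

Lemma iso_trans (X Y Z : rp) : iso X Y -> iso Y Z -> iso X Z.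
Proof.
case=> f [g [hf fg]] [f' [g' [hf' fg']]].
exists (fun i => f i *m f' i), (fun i => g' i *m g i); split.
  exact: hom_comp.
move=> i; case: (fg i) (fg' i) => [e1 e2] [e3 e4]; split.
  by rewrite mulmxA -(mulmxA (f i)) e3 mulmx1 e1.
by rewrite mulmxA -(mulmxA (g' i)) e2 mulmx1 e4.
Qed.

Lemma hom_il (X Y : rp) : hom X (rsum X Y) (fun i => row_mx 1%:M 0).
Proof.
move=> r /=; rewrite mul_mx_row mul_row_block ?mulmx1 ?mulmx0 ?mul1mx ?mul0mx.
by rewrite ?addr0 ?add0r.
Qed.

Lemma hom_ir (X Y : rp) : hom Y (rsum X Y) (fun i => row_mx 0 1%:M).
Proof.
move=> r /=; rewrite mul_mx_row mul_row_block ?mulmx1 ?mulmx0 ?mul1mx ?mul0mx.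
by rewrite ?addr0 ?add0r.
Qed.

Lemma hom_pl (X Y : rp) : hom (rsum X Y) X (fun i => col_mx 1%:M 0).
Proof.
move=> r /=; rewrite !mul_col_mx !mul_row_col ?mulmx1 ?mulmx0 ?mul1mx ?mul0mx.
by rewrite ?addr0 ?add0r.
Qed.

Lemma hom_pr (X Y : rp) : hom (rsum X Y) Y (fun i => col_mx 0 1%:M).
Proof.
move=> r /=; rewrite !mul_col_mx !mul_row_col ?mulmx1 ?mulmx0 ?mul1mx ?mul0mx.
by rewrite ?addr0 ?add0r.
Qed.

Lemma hom_row (T X Y : rp) f g : hom T X f -> hom T Y g ->
  hom T (rsum X Y) (fun i => row_mx (f i) (g i)).
Proof.
move=> hf hg r /=; rewrite mul_mx_row mul_row_block ?mulmx0 ?mul0mx.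
by rewrite addr0 add0r hf hg.
Qed.

Lemma hom_col (X Y T : rp) f g : hom X T f -> hom Y T g ->
  hom (rsum X Y) T (fun i => col_mx (f i) (g i)).
Proof.
move=> hf hg r /=; rewrite !mul_col_mx !mul_row_col ?mulmx0 ?mul0mx.
by rewrite ?addr0 ?add0r hf hg.
Qed.

Lemma il_pl m n : row_mx 1%:M (0 : 'M[k]_(m, n)) *m col_mx 1%:M 0 = 1%:M.
Proof. by rewrite mul_row_col mulmx1 mul0mx addr0. Qed.
Lemma ir_pr m n : row_mx (0 : 'M[k]_(n, m)) 1%:M *m col_mx 0 1%:M = 1%:M.
Proof. by rewrite mul_row_col mulmx1 mul0mx add0r. Qed.
Lemma il_pr m n : row_mx 1%:M (0 : 'M[k]_(m, n)) *m col_mx 0 1%:M = 0.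
Proof. by rewrite mul_row_col mulmx0 mul0mx addr0. Qed.
Lemma ir_pl m n : row_mx (0 : 'M[k]_(n, m)) 1%:M *m col_mx 1%:M 0 = 0.
Proof. by rewrite mul_row_col mulmx0 mul0mx addr0. Qed.
Lemma pl_il_pr_ir m n :
  col_mx 1%:M 0 *m row_mx 1%:M 0 + col_mx 0 1%:M *m row_mx 0 1%:M = 1%:M :> 'M[k]_(m + n).
Proof.
rewrite !mul_col_row ?mulmx1 ?mulmx0 ?mul0mx ?mul1mx add_block_mx ?addr0 ?add0r.
by rewrite -scalar_mx_block.
Qed.

Lemma ilpl_l p m n (B : 'M[k]_(p, m)) : B *m row_mx 1%:M (0 : 'M[k]_(m, n)) *m col_mx 1%:M 0 = B.
Proof. by rewrite -mulmxA il_pl mulmx1. Qed.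
Lemma irpr_l p m n (B : 'M[k]_(p, n)) : B *m row_mx (0 : 'M[k]_(n, m)) 1%:M *m col_mx 0 1%:M = B.
Proof. by rewrite -mulmxA ir_pr mulmx1. Qed.
Lemma ilpr_l p m n (B : 'M[k]_(p, m)) : B *m row_mx 1%:M (0 : 'M[k]_(m, n)) *m col_mx 0 1%:M = 0.
Proof. by rewrite -mulmxA il_pr mulmx0. Qed.
Lemma irpl_l p m n (B : 'M[k]_(p, n)) : B *m row_mx (0 : 'M[k]_(n, m)) 1%:M *m col_mx 1%:M 0 = 0.
Proof. by rewrite -mulmxA ir_pl mulmx0. Qed.

Lemma bp_mid p q m n (B : 'M[k]_(p, m + n)) (C : 'M[k]_(m + n, q)) :
  B *m col_mx 1%:M 0 *m row_mx 1%:M 0 *m C + B *m col_mx 0 1%:M *m row_mx 0 1%:M *m C = B *m C.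
Proof.
rewrite -!mulmxA -mulmxDr (mulmxA (col_mx 1%:M 0)) (mulmxA (col_mx 0 1%:M)) -mulmxDl.
by rewrite pl_il_pr_ir mul1mx.
Qed.

Ltac bps := rewrite ?mulmxA ?ilpl_l ?ilpr_l ?irpl_l ?irpr_l ?il_pl ?ir_pr ?il_pr ?ir_pl
  ?mul0mx ?mulmx0 ?mul1mx ?mulmx1 ?add0r ?addr0.

Lemma biprod (X Y1 Y2 : rp) j1 p1 j2 p2 :
  hom Y1 X j1 -> hom X Y1 p1 -> hom Y2 X j2 -> hom X Y2 p2 ->
  (forall i, j1 i *m p1 i = 1%:M) -> (forall i, j2 i *m p2 i = 1%:M) ->
  (forall i, p1 i *m j1 i + p2 i *m j2 i = 1%:M) ->
  iso X (rsum Y1 Y2).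
Proof.
move=> hj1 hp1 hj2 hp2 e1 e2 e.
have z12 i : j1 i *m p2 i = 0.
  have := congr1 (fun M => j1 i *m M *m p2 i) (e i) => /=.
  rewrite mulmx1 mulmxDr mulmxDl.
  have -> : j1 i *m (p1 i *m j1 i) *m p2 i = j1 i *m p2 i by rewrite mulmxA e1 mul1mx.
  have -> : j1 i *m (p2 i *m j2 i) *m p2 i = j1 i *m p2 i by rewrite -!mulmxA e2 mulmx1.
  by move/eqP; rewrite -subr_eq0 addrK => /eqP.
have z21 i : j2 i *m p1 i = 0.
  have := congr1 (fun M => j2 i *m M *m p1 i) (e i) => /=.
  rewrite mulmx1 mulmxDr mulmxDl.
  have -> : j2 i *m (p2 i *m j2 i) *m p1 i = j2 i *m p1 i by rewrite mulmxA e2 mul1mx.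
  have -> : j2 i *m (p1 i *m j1 i) *m p1 i = j2 i *m p1 i by rewrite -!mulmxA e1 mulmx1.
  by move/eqP; rewrite -subr_eq0 addrK => /eqP.
exists (fun i => row_mx (p1 i) (p2 i)), (fun i => col_mx (j1 i) (j2 i)); split.
  exact: hom_row.
move=> i; split; first by rewrite mul_row_col e.
by rewrite mul_col_row e1 e2 z12 z21 -scalar_mx_block.
Qed.

Lemma rsum_comm (X Y : rp) : iso (rsum X Y) (rsum Y X).
Proof.
apply: (biprod (hom_ir X Y) (hom_pr X Y) (hom_il X Y) (hom_pl X Y)).
- by move=> i; rewrite ir_pr.
- by move=> i; rewrite il_pl.
by move=> i; rewrite addrC pl_il_pr_ir.
Qed.

Lemma rsum_assoc (X Y Z : rp) : iso (rsum (rsum X Y) Z) (rsum X (rsum Y Z)).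
Proof.
apply: (biprod (hom_comp (hom_il X Y) (hom_il (rsum X Y) Z))
               (hom_comp (hom_pl (rsum X Y) Z) (hom_pl X Y))
               (hom_col (hom_comp (hom_ir X Y) (hom_il (rsum X Y) Z)) (hom_ir (rsum X Y) Z))
               (hom_row (hom_comp (hom_pl (rsum X Y) Z) (hom_pr X Y)) (hom_pr (rsum X Y) Z))).
- by move=> i /=; bps.
- by move=> i /=; rewrite mul_col_row; bps; rewrite -scalar_mx_block.
move=> i /=; rewrite mul_row_col; bps.
by rewrite addrA bp_mid pl_il_pr_ir.
Qed.

Lemma rsum_iso (X X' Y Y' : rp) : iso X X' -> iso Y Y' -> iso (rsum X Y) (rsum X' Y').
Proof.
case=> f [g [hf fg]] [f' [g' [hf' fg']]].
have hg := hom_inv hf (fun i => (fg i).1) (fun i => (fg i).2).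
have hg' := hom_inv hf' (fun i => (fg' i).1) (fun i => (fg' i).2).
apply: (biprod (hom_comp hg (hom_il X Y)) (hom_comp (hom_pl X Y) hf)
               (hom_comp hg' (hom_ir X Y)) (hom_comp (hom_pr X Y) hf')).
- by move=> i; rewrite mulmxA -(mulmxA (g i)) il_pl mulmx1 (fg i).2.
- by move=> i; rewrite mulmxA -(mulmxA (g' i)) ir_pr mulmx1 (fg' i).2.
move=> i; rewrite !mulmxA -(mulmxA _ (f i)) -(mulmxA _ (f' i)) (fg i).1 (fg' i).1.
by rewrite !mulmx1 pl_il_pr_ir.
Qed.


Lemma iso_dim (X Y : rp) : iso X Y -> forall i, rdim X i = rdim Y i.
Proof.
have H (X' Y' : rp) : iso X' Y' -> forall i, (rdim X' i <= rdim Y' i)%N.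
  case=> f [g [_ fg]] i; case: (fg i) => e _.
  have := mxrankM_maxl (f i) (g i); rewrite e mxrank1 => h.
  exact: leq_trans h (rank_leq_col _).
by move=> h i; apply/eqP; rewrite eqn_leq !H //; apply: iso_sym.
Qed.

Lemma zero_iso (X : rp) : (forall i, rdim X i = 0%N) -> iso X (rzero s t k).
Proof.
move=> H; exists (fun i => 0), (fun i => 0); split; first by move=> r; rewrite mulmx0 mul0mx.
move=> i; split; last by apply/matrixP => -[].
have: forall n, n = 0%N -> (0 : 'M[k]_(n,0)) *m (0:'M_(0,n)) = 1%:M.
  by move=> n ->; apply/matrixP => -[].
by move/(_ (rdim X i) (H i)).
Qed.

Lemma rsum0r (X : rp) : iso (rsum X (rzero s t k)) X.
Proof.
exists (fun i => col_mx 1%:M 0), (fun i => row_mx 1%:M 0); split.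
  exact: hom_pl.
move=> i; split; last exact: il_pl.
have E := @pl_il_pr_ir (rdim X i) 0%N.
have Z0 : (1%:M : 'M[k]_0) = 0 by apply: flatmx0.
rewrite Z0 col_mx0 mul0mx addr0 in E; exact: E.
Qed.

Lemma rsum0l (X : rp) : iso (rsum (rzero s t k) X) X.
Proof. exact: iso_trans (rsum_comm _ _) (rsum0r X). Qed.

Definition Ndim (X : rp) := (\sum_(i : V) rdim X i)%N.

Lemma Ndim_iso (X Y : rp) : iso X Y -> Ndim X = Ndim Y.
Proof. by move=> h; apply: eq_bigr => i _; apply: iso_dim. Qed.

Lemma Ndim_rsum (X Y : rp) : Ndim (rsum X Y) = (Ndim X + Ndim Y)%N.
Proof. by rewrite /Ndim -big_split. Qed.

Lemma nonzeroP (X : rp) : rep_nonzero X <-> (0 < Ndim X)%N.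
Proof.
split.
  case=> i Hi; rewrite /Ndim (bigD1 i) //= ltn_addr //.
  by rewrite lt0n; apply/eqP.
move=> H; apply: NNPP => nz; move: H; rewrite /Ndim big1 // => i _.
by case: (rdim X i =P 0%N) => // Hi; exfalso; apply: nz; exists i.
Qed.

Lemma nonzero_iso (X Y : rp) : iso X Y -> rep_nonzero X -> rep_nonzero Y.
Proof. by move=> h; rewrite !nonzeroP (Ndim_iso h). Qed.

Lemma zero_Ndim (X : rp) : Ndim X = 0%N -> iso X (rzero s t k).
Proof.
move=> H; apply: zero_iso => i; apply/eqP; move: H; rewrite /Ndim (bigD1 i) //=.
by move/eqP; rewrite addn_eq0 => /andP[].
Qed.

Definition bigl (l : seq rp) : rp := foldr (@rsum V A s t k) (rzero s t k) l.

Lemma bigl_cat l1 l2 : iso (bigl (l1 ++ l2)) (rsum (bigl l1) (bigl l2)).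
Proof.
elim: l1 => [|x l1 IH] /=; first exact: iso_sym (rsum0l _).
apply: iso_trans (iso_sym (rsum_assoc _ _ _)).
exact: rsum_iso (iso_refl _) IH.
Qed.

Lemma bigl_perm l1 l2 : Permutation l1 l2 -> iso (bigl l1) (bigl l2).
Proof.
elim=> [|x l l' _ IH|x y l|l l' l'' _ IH1 _ IH2] /=.
- exact: iso_refl.
- exact: rsum_iso (iso_refl _) IH.
- apply: iso_trans (iso_sym (rsum_assoc _ _ _)) _.
  apply: iso_trans (rsum_iso (rsum_comm _ _) (iso_refl _)) _.
  exact: rsum_assoc.
- exact: iso_trans IH1 IH2.
Qed.

Lemma Ndim_bigl l : Ndim (bigl l) = (\sum_(x <- l) Ndim x)%N.
Proof.
elim: l => [|x l IH] /=; first by rewrite big_nil /Ndim big1.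
by rewrite Ndim_rsum IH big_cons.
Qed.

Lemma bigl_nil_iso l : (forall x, List.In x l -> rep_nonzero x) ->
  iso (bigl l) (rzero s t k) -> l = [::].
Proof.
case: l => // x l H h; exfalso.
have Z : Ndim (rzero s t k) = 0%N by rewrite /Ndim big1.
have := Ndim_iso h; rewrite /= Ndim_rsum Z => /eqP.
rewrite addn_eq0 => /andP[/eqP H0 _].
by move: (H x (or_introl erefl)); rewrite nonzeroP H0.
Qed.


Section Img.
Variable n : nat.
Variable E : 'M[k]_n.
Hypothesis idE : E *m E = E.
Let B := row_base E.
Let P := E *m pinvmx B.

Lemma rb_E : B *m E = B.
Proof.
have : (B <= E)%MS by rewrite eq_row_base.
by case/submxP => D ->; rewrite -mulmxA idE.
Qed.

Lemma P_B : P *m B = E.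
Proof. by rewrite /P mulmxKpV // eq_row_base. Qed.

Lemma B_P : B *m P = 1%:M.
Proof. by rewrite /P mulmxA rb_E mulmxVp // row_base_free. Qed.
End Img.

Lemma img (X : rp) e : hom X X e -> (forall i, e i *m e i = e i) ->
  exists (Y : rp) (J : forall i, 'M[k]_(rdim Y i, rdim X i))
         (P : forall i, 'M[k]_(rdim X i, rdim Y i)),
    [/\ hom Y X J, hom X Y P, (forall i, J i *m P i = 1%:M),
        (forall i, P i *m J i = e i) & (forall i, rdim Y i = \rank (e i))].
Proof.
move=> he ide.
pose Y : rp := @Rep V A s t k (fun i => \rank (e i))
   (fun r => row_base (e (s r)) *m rmap X r *m (e (t r) *m pinvmx (row_base (e (t r))))).
exists Y, (fun i => row_base (e i)), (fun i => e i *m pinvmx (row_base (e i))).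
split => //.
- by move=> r /=; rewrite -mulmxA P_B // -mulmxA he mulmxA rb_E.
- move=> r /=; have PB := P_B (e (s r)).
  rewrite (mulmxA (rmap X r)) he.
  rewrite (mulmxA (e (s r) *m pinvmx (row_base (e (s r)))) (row_base (e (s r)) *m rmap X r)).
  rewrite (mulmxA (e (s r) *m pinvmx (row_base (e (s r)))) (row_base (e (s r)))) PB.
  by rewrite [RHS]mulmxA -[in RHS](mulmxA (e (s r))) he mulmxA ide.
- by move=> i; rewrite B_P.
- by move=> i; rewrite P_B.
Qed.

Lemma split_idem (X : rp) e : hom X X e -> (forall i, e i *m e i = e i) ->
  exists Y1 Y2 : rp, [/\ iso X (rsum Y1 Y2),
     (forall i, rdim Y1 i = \rank (e i)) & (forall i, rdim Y2 i = \rank (1%:M - e i))].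
Proof.
move=> he ide.
have he' : hom X X (fun i => 1%:M - e i) by apply: hom_sub => //; apply: hom_id.
have ide' i : (1%:M - e i) *m (1%:M - e i) = 1%:M - e i.
  by rewrite mulmxBl mul1mx mulmxBr mulmx1 ide subrr subr0.
case: (img he ide) => Y1 [J1 [P1 [hJ1 hP1 JP1 PJ1 d1]]].
case: (img he' ide') => Y2 [J2 [P2 [hJ2 hP2 JP2 PJ2 d2]]].
exists Y1, Y2; split => //.
apply: (biprod hJ1 hP1 hJ2 hP2 JP1 JP2) => i.
by rewrite PJ1 PJ2 addrC subrK.
Qed.

Lemma retract (X U : rp) j p : hom U X j -> hom X U p ->
  (forall i, j i *m p i = 1%:M) -> exists W, iso X (rsum U W).
Proof.
move=> hj hp jp.
have he : hom X X (fun i => 1%:M - p i *m j i).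
  by apply: hom_sub; [apply: hom_id | apply: hom_comp].
have ide i : (1%:M - p i *m j i) *m (1%:M - p i *m j i) = 1%:M - p i *m j i.
  rewrite mulmxBl mul1mx mulmxBr mulmx1 !mulmxA -(mulmxA (p i)) jp mulmx1.
  by rewrite subrr subr0.
case: (img he ide) => Y2 [J2 [P2 [hJ2 hP2 JP2 PJ2 _]]].
exists Y2; apply: (biprod hj hp hJ2 hP2 jp JP2) => i.
by rewrite PJ2 addrC subrK.
Qed.


Definition pev n : 'M[k]_n -> {poly k} -> 'M[k]_n :=
  match n return 'M[k]_n -> {poly k} -> 'M[k]_n with
  | 0 => fun _ _ => 0
  | n'.+1 => fun A p => horner_mx A p
  end.

Lemma mx0_eq n (M N : 'M[k]_(n, 0)) : M = N.
Proof. by rewrite (thinmx0 M) (thinmx0 N). Qed.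
Lemma mx0_eq' n (M N : 'M[k]_(0, n)) : M = N.
Proof. by rewrite (flatmx0 M) (flatmx0 N). Qed.

Lemma pevD n (B : 'M[k]_n) p q : pev B (p + q) = pev B p + pev B q.
Proof. by case: n B => [|n] B; [apply: mx0_eq | rewrite /= rmorphD]. Qed.

Lemma pevN n (B : 'M[k]_n) p : pev B (- p) = - pev B p.
Proof. by case: n B => [|n] B; [apply: mx0_eq | rewrite /= rmorphN]. Qed.

Lemma pevM n (B : 'M[k]_n) p q : pev B (p * q) = pev B p *m pev B q.
Proof. by case: n B => [|n] B; [apply: mx0_eq | rewrite /= rmorphM]. Qed.

Lemma pev1 n (B : 'M[k]_n) : pev B 1 = 1%:M.
Proof. by case: n B => [|n] B; [apply: mx0_eq | rewrite /= rmorph1]. Qed.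

Lemma pevX n (B : 'M[k]_n) : pev B 'X = B.
Proof. by case: n B => [|n] B; [apply: mx0_eq | rewrite /= horner_mx_X]. Qed.

Lemma pevC n (B : 'M[k]_n) c : pev B c%:P = c%:M.
Proof. by case: n B => [|n] B; [apply: mx0_eq | rewrite /= horner_mx_C]. Qed.

Lemma pev_char n (B : 'M[k]_n) p : char_poly B %| p -> pev B p = 0.
Proof.
case: n B => [|n] B; first by move=> _; apply: mx0_eq.
by move=> /divpK <-; rewrite /= rmorphM /= Cayley_Hamilton mulr0.
Qed.

Lemma pev_hom_gen m n (M : 'M[k]_(m, n)) (Am : 'M[k]_m) (Bn : 'M[k]_n) :
  M *m Bn = Am *m M -> forall p, M *m pev Bn p = pev Am p *m M.
Proof.
move=> hM p; case: m M Am hM => [|m] M Am hM; first by apply: mx0_eq'.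
case: n M Bn hM => [|n] M Bn hM; first by apply: mx0_eq.
elim/poly_ind: p => [|p c IH]; first by rewrite /= !rmorph0 mulmx0 mul0mx.
rewrite /= !rmorphD !rmorphM /= !horner_mx_X !horner_mx_C -!mulmxE.
rewrite mulmxDr mulmxDl mul_mx_scalar mul_scalar_mx; congr (_ + _).
by rewrite mulmxA IH -!mulmxA hM.
Qed.

Lemma hom_pev (X : rp) f p : hom X X f -> hom X X (fun i => pev (f i) p).
Proof. by move=> hf r; apply: pev_hom_gen; apply: hf. Qed.

Lemma pev_bezout n (B : 'M[k]_n) p q (u : {poly k} * {poly k}) :
  u.1 * p + u.2 * q = 1 -> pev B u.1 *m pev B p + pev B u.2 *m pev B q = 1%:M.
Proof. by move=> e; rewrite -!pevM -pevD e pev1. Qed.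

Lemma Xm_factor (P : {poly k}) : P != 0 -> exists m q, P = 'X^m * q /\ ~~ root q 0.
Proof.
move: {2}(size P) (leqnn (size P)) => N; elim: N P => [|N IH] P.
  by rewrite leqn0 size_poly_eq0 => /eqP -> /eqP.
move=> sP nzP; case r0: (root P 0); last by exists 0%N, P; rewrite expr0 mul1r r0.
case/factor_theorem: r0 => q Pq; rewrite polyC0 subr0 in Pq.
have nzq : q != 0 by apply: contraNneq nzP => q0; rewrite Pq q0 mul0r.
have [|m [q' [eq nr]]] := IH q _ nzq.
  by move: sP; rewrite Pq size_mulX.
by exists m.+1, q'; rewrite Pq eq exprS mulrC mulrA.
Qed.

Definition indec (X : rp) := rep_nonzero X /\
  ~ exists Y Z : rp, [/\ rep_nonzero Y, rep_nonzero Z & iso X (rsum Y Z)].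

Lemma idem01 (U : rp) e : indec U -> hom U U e -> (forall i, e i *m e i = e i) ->
  (forall i, e i = 0) \/ (forall i, e i = 1%:M).
Proof.
move=> [nzU ndec] he ide.
case: (split_idem he ide) => Y1 [Y2 [h d1 d2]].
apply: NNPP => H; apply: ndec; exists Y1, Y2; split => //.
- apply: NNPP => nz1; apply: H; left => i; apply/eqP; rewrite -mxrank_eq0 -d1.
  by apply/eqP; apply: NNPP => ne; apply: nz1; exists i.
- apply: NNPP => nz2; apply: H; right => i; apply/eqP; rewrite -subr_eq0 -oppr_eq0 opprB.
  by rewrite -mxrank_eq0 -d2; apply/eqP; apply: NNPP => ne; apply: nz2; exists i.
Qed.

Lemma fitting (U : rp) f : indec U -> hom U U f ->
  (forall i, f i \in unitmx) \/ (forall i, f i - 1%:M \in unitmx).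
Proof.
move=> iU hf.
pose P := \prod_(i : V) char_poly (f i).
have nzP : P != 0 by apply: monic_neq0; apply: monic_prod => i _; apply: char_poly_monic.
have hP i : pev (f i) P = 0.
  by apply: pev_char; rewrite /P (bigD1 i) //= dvdp_mulr.
case: (Xm_factor nzP) => m [q [Pq nrq]].
have cXq : coprimep 'X q by rewrite coprimep_sym -[X in coprimep _ X]subr0 -polyC0 coprimep_XsubC.
have /Bezout_eq1_coprimepP [u eu] := coprimep_expl m cXq.
pose e i := pev (f i) (u.1 * 'X^m).
have he : hom U U e by move=> r; apply: hom_pev.
have e1 i : e i + pev (f i) (u.2 * q) = 1%:M by rewrite -pevD eu pev1.
have eq0 i : pev (f i) (u.1 * 'X^m * (u.2 * q)) = 0.
  have -> : u.1 * 'X^m * (u.2 * q) = (u.1 * u.2) * P.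
    by rewrite Pq mulrA -(mulrA u.1) (mulrC 'X^m) !mulrA.
  by rewrite pevM hP mulmx0.
have ide i : e i *m e i = e i.
  have := congr1 (mulmx (e i)) (e1 i).
  by rewrite mulmxDr mulmx1 -(pevM (f i) (u.1 * 'X^m) (u.2 * q)) eq0 addr0.
case: (idem01 iU he ide) => H; [right | left] => i.
- (* f nilpotent *)
  have fm : pev (f i) ('X^m) = 0.
    rewrite -[pev _ ('X^m)]mulmx1 -(e1 i) mulmxDr (H i) mulmx0 add0r -pevM.
    have -> : 'X^m * (u.2 * q) = u.2 * P by rewrite Pq mulrCA.
    by rewrite pevM hP mulmx0.
  have cX1 : coprimep ('X^m : {poly k}) ('X - 1%:P).
    by apply: coprimep_expl; rewrite coprimep_XsubC rootX oner_eq0.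
  have /Bezout_eq1_coprimepP [v ev] := cX1.
  have := pev_bezout (f i) ev; rewrite fm mulmx0 add0r pevD pevX pevN pevC.
  by case/mulmx1_unit.
- (* f invertible *)
  have q0 : pev (f i) q = 0.
    rewrite -[pev _ q]mulmx1 -(H i) /e -pevM.
    have -> : q * (u.1 * 'X^m) = u.1 * P by rewrite Pq mulrCA (mulrC q).
    by rewrite pevM hP mulmx0.
  have /Bezout_eq1_coprimepP [v ev] := cXq.
  have := pev_bezout (f i) ev; rewrite q0 mulmx0 addr0 pevX.
  by case/mulmx1_unit.
Qed.


Lemma ulE m1 m2 n1 n2 (M : 'M[k]_(m1 + m2, n1 + n2)) :
  ulsubmx M = row_mx 1%:M 0 *m M *m col_mx 1%:M 0.
Proof. by rewrite -{2}(submxK M) mul_row_block mul_row_col; bps. Qed.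
Lemma urE m1 m2 n1 n2 (M : 'M[k]_(m1 + m2, n1 + n2)) :
  ursubmx M = row_mx 1%:M 0 *m M *m col_mx 0 1%:M.
Proof. by rewrite -{2}(submxK M) mul_row_block mul_row_col; bps. Qed.
Lemma dlE m1 m2 n1 n2 (M : 'M[k]_(m1 + m2, n1 + n2)) :
  dlsubmx M = row_mx 0 1%:M *m M *m col_mx 1%:M 0.
Proof. by rewrite -{2}(submxK M) mul_row_block mul_row_col; bps. Qed.
Lemma drE m1 m2 n1 n2 (M : 'M[k]_(m1 + m2, n1 + n2)) :
  drsubmx M = row_mx 0 1%:M *m M *m col_mx 0 1%:M.
Proof. by rewrite -{2}(submxK M) mul_row_block mul_row_col; bps. Qed.

Lemma elimv u p q (F : 'M[k]_(u + p, u + q)) (G : 'M[k]_(u + q, u + p)) :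
  F *m G = 1%:M -> G *m F = 1%:M -> ulsubmx F \in unitmx ->
  (drsubmx F - dlsubmx F *m invmx (ulsubmx F) *m ursubmx F) *m drsubmx G = 1%:M /\
  drsubmx G *m (drsubmx F - dlsubmx F *m invmx (ulsubmx F) *m ursubmx F) = 1%:M.
Proof.
move=> FG GF ua.
move: FG; rewrite -(submxK F) -(submxK G) mulmx_block (scalar_mx_block u p).
case/eq_block_mx => _ e2 _ e4.
move: GF; rewrite -(submxK F) -(submxK G) mulmx_block (scalar_mx_block u q).
case/eq_block_mx => _ _ f3 f4.
rewrite !block_mxKul !block_mxKur !block_mxKdl !block_mxKdr.
move: e2 e4 f3 f4 ua.
set a := ulsubmx F; set b := ursubmx F; set c := dlsubmx F; set d := drsubmx F.
set a' := ulsubmx G; set b' := ursubmx G; set c' := dlsubmx G; set d' := drsubmx G.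
move=> e2 e4 f3 f4 ua.
have bd : b *m d' = - (a *m b').
  by apply/eqP; rewrite -addr_eq0 addrC e2.
have dc : d' *m c = - (c' *m a).
  by apply/eqP; rewrite -addr_eq0 addrC f3.
split.
  rewrite mulmxBl -!mulmxA bd !mulmxN (mulmxA (invmx a)) mulVmx // mul1mx opprK.
  by rewrite addrC.
rewrite mulmxBr !mulmxA dc !mulNmx -(mulmxA c') mulmxV // mulmx1 opprK.
by rewrite addrC.
Qed.

Definition summand (U X : rp) := exists W, iso X (rsum U W).

Lemma iso_homs (X Y : rp) : iso X Y -> exists f g,
  [/\ hom X Y f, hom Y X g, (forall i, f i *m g i = 1%:M) & (forall i, g i *m f i = 1%:M)].
Proof.
case=> f [g [hf fg]]; exists f, g; split => // [|i|i]; try by case: (fg i).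
by apply: (hom_inv hf) => i; case: (fg i).
Qed.

Lemma hom_iso (X Y : rp) f g : hom X Y f ->
  (forall i, f i *m g i = 1%:M) -> (forall i, g i *m f i = 1%:M) -> iso X Y.
Proof. by move=> hf fg gf; exists f, g; split. Qed.

Lemma ls_gen (U W Q : rp) j1 p1 j2 p2 : indec U ->
  hom U W j1 -> hom W U p1 -> hom U Q j2 -> hom Q U p2 ->
  (forall i, j1 i *m p1 i + j2 i *m p2 i = 1%:M) -> summand U W \/ summand U Q.
Proof.
move=> iU hj1 hp1 hj2 hp2 e.
have hg : hom U U (fun i => j1 i *m p1 i) by apply: hom_comp.
case: (fitting iU hg) => H.
  left; apply: (retract hj1 (hom_comp hp1 (hom_invmx hg H))).
  by move=> i; rewrite mulmxA mulmxV.
have H2 i : j2 i *m p2 i \in unitmx.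
  have -> : j2 i *m p2 i = (-1) *: (j1 i *m p1 i - 1%:M).
    by rewrite scaleN1r opprB -(e i) addrAC subrr add0r.
  by rewrite unitmxZ ?H // unitrN1.
have hg2 : hom U U (fun i => j2 i *m p2 i) by apply: hom_comp.
right; apply: (retract hj2 (hom_comp hp2 (hom_invmx hg2 H2))).
by move=> i; rewrite mulmxA mulmxV.
Qed.

Lemma local_summand (U P W Q : rp) : indec U -> iso (rsum U P) (rsum W Q) ->
  summand U W \/ summand U Q.
Proof.
move=> iU /iso_homs [f [g [hf hg fg gf]]].
apply: (ls_gen iU (hom_comp (hom_comp (hom_il U P) hf) (hom_pl W Q))
                  (hom_comp (hom_comp (hom_il W Q) hg) (hom_pl U P))
                  (hom_comp (hom_comp (hom_il U P) hf) (hom_pr W Q))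
                  (hom_comp (hom_comp (hom_ir W Q) hg) (hom_pl U P))).
move=> i /=; rewrite !mulmxA -!(mulmxA _ (g i) (col_mx 1%:M 0)) bp_mid.
by rewrite mulmxA -(mulmxA _ (f i)) fg mulmx1 il_pl.
Qed.


Lemma elim_iso (U P Q : rp) f g : hom (rsum U P) (rsum U Q) f ->
  (forall i, f i *m g i = 1%:M) -> (forall i, g i *m f i = 1%:M) ->
  (forall i, ulsubmx (f i) \in unitmx) -> iso P Q.
Proof.
move=> hf fg gf ua.
have hg := hom_inv hf fg gf.
have ha : hom U U (fun i => row_mx 1%:M 0 *m f i *m col_mx 1%:M 0).
  exact: hom_comp (hom_comp (hom_il U P) hf) (hom_pl U Q).
have ua' i : row_mx 1%:M 0 *m f i *m col_mx 1%:M 0 \in unitmx by rewrite -ulE.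
pose th i := row_mx 0 1%:M *m f i *m col_mx 0 1%:M -
  (row_mx 0 1%:M *m f i *m col_mx 1%:M 0) *m invmx (row_mx 1%:M 0 *m f i *m col_mx 1%:M 0)
  *m (row_mx 1%:M 0 *m f i *m col_mx 0 1%:M).
have hth : hom P Q th.
  apply: hom_sub; first exact: hom_comp (hom_comp (hom_ir U P) hf) (hom_pr U Q).
  apply: hom_comp; last exact: hom_comp (hom_comp (hom_il U P) hf) (hom_pr U Q).
  apply: hom_comp (hom_invmx ha ua').
  exact: hom_comp (hom_comp (hom_ir U P) hf) (hom_pl U Q).
apply: (hom_iso (g := fun i => drsubmx (g i)) hth) => i;
  case: (elimv (fg i) (gf i) (ua i)); rewrite /th -ulE -urE -dlE -drE //.
Qed.

Lemma canc1 (U P Q : rp) : indec U -> iso (rsum U P) (rsum U Q) -> iso P Q.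
Proof.
move=> iU /iso_homs [f [g [hf hg fg gf]]].
case: (classic (forall i, ulsubmx (f i) \in unitmx)) => [ua|nua].
  exact: elim_iso hf fg gf ua.
pose a i := row_mx 1%:M 0 *m f i *m col_mx 1%:M 0.
pose a' i := row_mx 1%:M 0 *m g i *m col_mx 1%:M 0.
pose c i := row_mx 1%:M 0 *m f i *m col_mx 0 1%:M.
pose c' i := row_mx 0 1%:M *m g i *m col_mx 1%:M 0.
have ha : hom U U a by exact: hom_comp (hom_comp (hom_il U P) hf) (hom_pl U Q).
have ha' : hom U U a' by exact: hom_comp (hom_comp (hom_il U Q) hg) (hom_pl U P).
have hc : hom U Q c by exact: hom_comp (hom_comp (hom_il U P) hf) (hom_pr U Q).
have hc' : hom Q U c' by exact: hom_comp (hom_comp (hom_ir U Q) hg) (hom_pl U P).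
have e i : a i *m a' i + c i *m c' i = 1%:M.
  rewrite /a /a' /c /c' !mulmxA -!(mulmxA _ (g i) (col_mx 1%:M 0)) bp_mid.
  by rewrite mulmxA -(mulmxA _ (f i)) fg mulmx1 il_pl.
have am1 : forall i, a i - 1%:M \in unitmx.
  case: (fitting iU ha) => // H; exfalso; apply: nua => i; rewrite ulE; exact: H.
have aam1 : forall i, a i *m a' i - 1%:M \in unitmx.
  case: (fitting iU (hom_comp ha ha')) => // H; exfalso; apply: nua => i.
  by have := H i; rewrite unitmx_mul ulE => /andP[].
have ucc i : c i *m c' i \in unitmx.
  have -> : c i *m c' i = (-1) *: (a i *m a' i - 1%:M).
    by rewrite scaleN1r opprB -(e i) addrC addKr.
  by rewrite unitmxZ ?aam1 // unitrN1.
have hcc : hom U U (fun i => c i *m c' i) by apply: hom_comp.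
pose N i := col_mx 0 1%:M *m (c' i *m invmx (c i *m c' i)) *m row_mx 1%:M 0
  : 'M[k]_(rdim U i + rdim Q i).
have hN : hom (rsum U Q) (rsum U Q) N.
  apply: hom_comp (hom_il U Q); apply: hom_comp (hom_pr U Q) _.
  exact: hom_comp hc' (hom_invmx hcc ucc).
have NN i : N i *m N i = 0.
  by rewrite /N -!mulmxA (mulmxA (row_mx 1%:M 0) (col_mx 0 1%:M)) il_pr !mul0mx !mulmx0.
have htau : hom (rsum U Q) (rsum U Q) (fun i => 1%:M - N i) by apply: hom_sub => //; apply: hom_id.
have tt' i : (1%:M - N i) *m (1%:M + N i) = 1%:M.
  by rewrite mulmxBl mul1mx mulmxDr mulmx1 NN addr0 addrK.
have t't i : (1%:M + N i) *m (1%:M - N i) = 1%:M.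
  by rewrite mulmxDl mul1mx mulmxBr mulmx1 NN subr0 subrK.
apply: (@elim_iso U P Q (fun i => f i *m (1%:M - N i)) (fun i => (1%:M + N i) *m g i)).
- exact: hom_comp hf htau.
- by move=> i; rewrite mulmxA -(mulmxA (f i)) tt' mulmx1 fg.
- by move=> i; rewrite mulmxA -(mulmxA _ (g i)) gf mulmx1 t't.
move=> i; rewrite ulE mulmxBr mulmx1 mulmxBr mulmxBl -/(a i).
have -> : row_mx 1%:M 0 *m (f i *m N i) *m col_mx 1%:M 0 = 1%:M.
  rewrite /N !mulmxA -!(mulmxA _ (row_mx 1%:M 0) (col_mx 1%:M 0)) il_pl mulmx1.
  by rewrite mulmxV //; have := ucc i; rewrite /c' !mulmxA.
exact: am1.
Qed.

Lemma canc_list us (P Q : rp) : (forall u, List.In u us -> indec u) ->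
  iso (rsum (bigl us) P) (rsum (bigl us) Q) -> iso P Q.
Proof.
elim: us => [|u us IH] /= H h.
  exact: iso_trans (iso_sym (rsum0l _)) (iso_trans h (rsum0l _)).
apply: IH => [v iv|]; first by apply: H; right.
apply: (canc1 (H u (or_introl erefl))).
apply: iso_trans (iso_sym (rsum_assoc _ _ _)) _.
exact: iso_trans h (rsum_assoc _ _ _).
Qed.

Lemma exist_dec (X : rp) : exists us, (forall u, List.In u us -> indec u) /\ iso X (bigl us).
Proof.
move: {2}(Ndim X) (leqnn (Ndim X)) => N; elim: N X => [|N IH] X hN.
  exists [::]; split => //; apply: zero_Ndim; apply/eqP; rewrite -leqn0 //.
case: (classic (rep_nonzero X)) => nz; last first.
  exists [::]; split => //; apply: zero_Ndim; apply/eqP; rewrite eqn_leq leq0n andbT.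
  by rewrite leqNgt; apply/negP => /nonzeroP.
case: (classic (indec X)) => iX.
  exists [:: X]; split; first by move=> u [<-|].
  exact: iso_sym (rsum0r X).
have [Y [Z [nY nZ h]]] : exists Y Z : rp, [/\ rep_nonzero Y, rep_nonzero Z & iso X (rsum Y Z)].
  by apply: NNPP => H; apply: iX.
have dX := Ndim_iso h; rewrite Ndim_rsum in dX.
move/nonzeroP: nY => nY; move/nonzeroP: nZ => nZ.
case: (IH Y) => [|ys [iys hy]]; first by rewrite -ltnS (leq_trans _ hN) // dX -addn1 leq_add2l.
case: (IH Z) => [|zs [izs hz]]; first by rewrite -ltnS (leq_trans _ hN) // dX -add1n leq_add2r.
exists (ys ++ zs); split.
  by move=> u Hu; case: (List.in_app_or _ _ _ Hu) => ?; [apply: iys | apply: izs].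
apply: iso_trans h (iso_trans (rsum_iso hy hz) (iso_sym (bigl_cat _ _))).
Qed.


Lemma summand_iso (U X Y : rp) : iso X Y -> summand U X -> summand U Y.
Proof. by move=> h [W hW]; exists W; apply: iso_trans (iso_sym h) hW. Qed.

Lemma summand_isoU (U U' X : rp) : iso U U' -> summand U X -> summand U' X.
Proof. by move=> h [W hW]; exists W; apply: iso_trans hW (rsum_iso h (iso_refl _)). Qed.

Lemma summand_trans (U X Y : rp) : summand U X -> summand X Y -> summand U Y.
Proof.
move=> [W hW] [W' hW']; exists (rsum W W').
apply: iso_trans hW' (iso_trans (rsum_iso hW (iso_refl _)) (rsum_assoc _ _ _)).
Qed.

Lemma summand_rsum (U X : rp) : summand U (rsum U X).
Proof. by exists X; apply: iso_refl. Qed.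

Lemma indec_nonzero (U : rp) : indec U -> rep_nonzero U.
Proof. by case. Qed.

Lemma summand_indec (U W : rp) : indec U -> indec W -> summand U W -> iso U W.
Proof.
move=> iU [nW dW] [W' h].
case: (classic (rep_nonzero W')) => nz.
  by exfalso; apply: dW; exists U, W'; split => //; case: iU.
have hz : iso W' (rzero s t k).
  apply: zero_Ndim; apply/eqP; rewrite eqn_leq leq0n andbT leqNgt.
  by apply/negP => /nonzeroP.
apply: iso_sym (iso_trans h (iso_trans (rsum_iso (iso_refl _) hz) (rsum0r _))).
Qed.

Lemma summand_bigl (U : rp) (I : Type) (F : I -> rp) (js : seq I) : indec U ->
  summand U (bigl (map F js)) -> exists j js', Permutation js (j :: js') /\ summand U (F j).
Proof.
move=> iU; elim: js => [|j js IH] /= [W h].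
  exfalso; have := Ndim_iso h; rewrite Ndim_rsum.
  have -> : Ndim (rzero s t k) = 0%N by rewrite /Ndim big1.
  move/esym/eqP; rewrite addn_eq0 => /andP[/eqP H _].
  by move: (indec_nonzero iU); rewrite nonzeroP H.
case: (local_summand iU (iso_sym h)) => [hj|hr].
  by exists j, js; split => //; apply: Permutation_refl.
case: (IH hr) => j' [js' [p hs]]; exists j', (j :: js'); split => //.
by apply: Permutation_trans (Permutation.perm_skip j p) (Permutation.perm_swap _ _ _).
Qed.

Definition qinv (b : qaut s t) : qaut s t :=
  @QAut V A s t (avi b) (aai b) (av b) (aa b) (aviK b) (avK b) (aaiK b) (aaK b)
        (aai_s b) (aai_t b).

Lemma cast_hom (X Y : rp) (f : forall i, 'M[k]_(rdim X i, rdim Y i)) (rho : A) (v w : V)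
  (ev : s rho = v) (ew : t rho = w) :
  rmap X rho *m f (t rho) = f (s rho) *m rmap Y rho ->
  castmx (congr1 (rdim X) ev, congr1 (rdim X) ew) (rmap X rho) *m f w =
  f v *m castmx (congr1 (rdim Y) ev, congr1 (rdim Y) ew) (rmap Y rho).
Proof. by case: v / ev; case: w / ew; rewrite !castmx_id. Qed.

Lemma tw_iso (b : qaut s t) (X Y : rp) : iso X Y -> iso (twist b X) (twist b Y).
Proof.
case=> f [g [hf fg]]; exists (fun i => f (avi b i)), (fun i => g (avi b i)); split.
  by move=> r; exact: (cast_hom (aai_s b r) (aai_t b r) (hf (aai b r))).
by move=> i; apply: fg.
Qed.

Lemma cast_block (X Y : rp) (rho : A) (v w : V) (ev : s rho = v) (ew : t rho = w) :
  castmx (congr1 (rdim (rsum X Y)) ev, congr1 (rdim (rsum X Y)) ew)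
     (block_mx (rmap X rho) 0 0 (rmap Y rho)) =
  block_mx (castmx (congr1 (rdim X) ev, congr1 (rdim X) ew) (rmap X rho)) 0 0
           (castmx (congr1 (rdim Y) ev, congr1 (rdim Y) ew) (rmap Y rho)).
Proof. by case: v / ev; case: w / ew; rewrite !castmx_id. Qed.

Lemma tw_rsum (b : qaut s t) (X Y : rp) :
  iso (twist b (rsum X Y)) (rsum (twist b X) (twist b Y)).
Proof.
exists (fun i => 1%:M), (fun i => 1%:M); split => [r|i]; last by rewrite mulmx1.
rewrite mulmx1 mul1mx; exact: cast_block.
Qed.

Lemma tw_rzero (b : qaut s t) : iso (twist b (rzero s t k)) (rzero s t k).
Proof. by apply: zero_iso. Qed.

Lemma iso_cast (X Y : rp) (ed : forall i, rdim X i = rdim Y i) :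
  (forall r, castmx (ed (s r), ed (t r)) (rmap X r) = rmap Y r) -> iso X Y.
Proof.
move=> H.
exists (fun i => castmx (erefl, ed i) 1%:M), (fun i => castmx (ed i, erefl) 1%:M).
split.
  move=> r; rewrite -H; move: (ed (s r)) (ed (t r)).
  move: (rdim Y (s r)) (rdim Y (t r)) => n1 n2 e1 e2.
  by case: n1 / e1; case: n2 / e2; rewrite !castmx_id mulmx1 mul1mx.
move=> i; move: (ed i); move: (rdim Y i) => n e.
by case: n / e; rewrite !castmx_id mulmx1.
Qed.

Lemma cast_self (X : rp) (rho r : A) (e : rho = r)
  (p : rdim X (s rho) = rdim X (s r)) (q : rdim X (t rho) = rdim X (t r)) :
  castmx (p, q) (rmap X rho) = rmap X r.
Proof.
case: r / e in p q *.
by rewrite (eq_irrelevance p erefl) (eq_irrelevance q erefl) castmx_id.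
Qed.

Lemma tw_inv (b : qaut s t) (X : rp) : iso (twist (qinv b) (twist b X)) X.
Proof.
apply: (@iso_cast (twist (qinv b) (twist b X)) X (fun i => congr1 (rdim X) (avK b i))) => r.
rewrite /= !castmx_comp; exact: cast_self (aaK b r) _ _.
Qed.

Lemma tw_refl (b : qaut s t) (X Y : rp) : iso (twist b X) (twist b Y) -> iso X Y.
Proof.
move=> h; apply: iso_trans (iso_sym (tw_inv b X)) _.
by apply: iso_trans (tw_inv b Y); apply: tw_iso.
Qed.

Lemma tw_nonzero (b : qaut s t) (X : rp) : rep_nonzero X -> rep_nonzero (twist b X).
Proof. by case=> i Hi; exists (av b i); rewrite /= avK. Qed.

Lemma tw_indec (b : qaut s t) (X : rp) : indec X -> indec (twist b X).
Proof.
case=> nX dX; split; first exact: tw_nonzero.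
case=> Y [Z [nY nZ h]]; apply: dX.
exists (twist (qinv b) Y), (twist (qinv b) Z); split; try exact: tw_nonzero.
apply: iso_trans (iso_sym (tw_inv b X)) _.
exact: iso_trans (tw_iso (qinv b) h) (tw_rsum _ _ _).
Qed.

Lemma tw_bigl (b : qaut s t) l : iso (twist b (bigl l)) (bigl (map (twist b) l)).
Proof.
elim: l => [|x l IH] /=; first exact: tw_rzero.
exact: iso_trans (tw_rsum _ _ _) (rsum_iso (iso_refl _) IH).
Qed.

Lemma tw_summand (b : qaut s t) (U X : rp) : summand U X -> summand (twist b U) (twist b X).
Proof.
by case=> W h; exists (twist b W); apply: iso_trans (tw_iso b h) (tw_rsum _ _ _).
Qed.


Lemma appE (T : Type) (l1 l2 : seq T) : List.app l1 l2 = l1 ++ l2.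
Proof. by elim: l1 => //= x l1 ->. Qed.

Lemma mapE (T U : Type) (f : T -> U) (l : seq T) : ListDef.map f l = map f l.
Proof. by elim: l => //= x l ->. Qed.

Lemma lengthE (T : Type) (l : seq T) : length l = size l.
Proof. by elim: l => //= x l ->. Qed.

Lemma in_cat (T : Type) (x : T) l1 l2 : List.In x (l1 ++ l2) <-> List.In x l1 \/ List.In x l2.
Proof. by rewrite -appE; split; [apply: List.in_app_or | apply: List.in_or_app]. Qed.

Lemma in_mapP (T U : Type) (f : T -> U) (l : seq T) y :
  List.In y (map f l) -> exists x, y = f x /\ List.In x l.
Proof. by rewrite -mapE => /List.in_map_iff [x [<- h]]; exists x. Qed.

Lemma in_map' (T U : Type) (f : T -> U) (l : seq T) x : List.In x l -> List.In (f x) (map f l).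
Proof. by rewrite -mapE; apply: List.in_map. Qed.

Lemma split_in (T : Type) (y : T) L : List.In y L -> exists l1 l2, L = l1 ++ y :: l2.
Proof. by move=> H; case: (List.in_split _ _ H) => l1 [l2 ->]; exists l1, l2; rewrite appE. Qed.

Lemma perm_mid (T : Type) (y : T) l1 l2 : Permutation (l1 ++ y :: l2) (y :: l1 ++ l2).
Proof. by rewrite -!appE; apply: Permutation_sym; apply: Permutation_middle. Qed.

Lemma perm_size (T : Type) (l l' : seq T) : Permutation l l' -> size l = size l'.
Proof. by rewrite -!lengthE; apply: Permutation_length. Qed.

Lemma perm_in (T : Type) (l l' : seq T) x : Permutation l l' -> List.In x l -> List.In x l'.
Proof. exact: Permutation_in. Qed.

Fixpoint pw (l : seq rp) : Prop :=
  if l is x :: l' then (forall y, List.In y l' -> ~ iso x y) /\ pw l' else True.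

Lemma pw_perm l0 l0' : Permutation l0 l0' -> pw l0 -> pw l0'.
Proof.
elim=> [//|x l1 l2 p IH|x y l|l1 l2 l3 _ IH1 _ IH2] /=.
- case=> H /IH; split => // z /(perm_in (Permutation_sym p)); exact: H.
- case=> Hy [Hx pl]; split.
    move=> z [<-|iz] h; first by apply: (Hy x); [left | apply: iso_sym].
    exact: Hx iz h.
  by split => // z iz; apply: Hy; right.
- by move/IH1/IH2.
Qed.


Lemma pw_app_l l1 l2 : pw (l1 ++ l2) -> pw l1.
Proof.
elim: l1 => //= x l1 IH [H /IH h]; split => // z iz; apply: H.
by apply/in_cat; left.
Qed.

Lemma rem_step x L1' l1 y l2 : pw (x :: L1') -> iso x y ->
  (forall z, List.In z L1' -> exists w, List.In w (l1 ++ y :: l2) /\ iso z w) ->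
  (forall z, List.In z L1' -> exists w, List.In w (l1 ++ l2) /\ iso z w).
Proof.
move=> [Hx _] hxy H z iz; case: (H z iz) => w [/in_cat iw hzw].
case: iw => [iw|[ew|iw]].
- by exists w; split => //; apply/in_cat; left.
- by exfalso; apply: (Hx z iz); apply: iso_trans hxy _; rewrite ew; apply: iso_sym.
- by exists w; split => //; apply/in_cat; right.
Qed.

Lemma len_le L1 : pw L1 -> forall L2,
  (forall z, List.In z L1 -> exists w, List.In w L2 /\ iso z w) -> (size L1 <= size L2)%N.
Proof.
elim: L1 => [|x L1 IH] //= pL L2 H.
case: (H x (or_introl erefl)) => y [iy hxy].
case: (split_in iy) => l1 [l2 eL]; rewrite eL in H *.
have := IH pL.2 (l1 ++ l2) (rem_step pL hxy (fun z iz => H z (or_intror iz))).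
by rewrite !size_cat /= addnS ltnS.
Qed.

Lemma match_s L1 : pw L1 -> forall L2, size L1 = size L2 ->
  (forall z, List.In z L1 -> exists w, List.In w L2 /\ iso z w) -> iso (bigl L1) (bigl L2).
Proof.
elim: L1 => [|x L1 IH] /= pL L2 sL H.
  by case: L2 sL H => // _ _; apply: iso_refl.
case: (H x (or_introl erefl)) => y [iy hxy].
case: (split_in iy) => l1 [l2 eL]; rewrite eL in H sL *.
apply: iso_trans _ (iso_sym (bigl_perm (perm_mid y l1 l2))).
apply: rsum_iso hxy (IH pL.2 _ _ (rem_step pL hxy (fun z iz => H z (or_intror iz)))).
by move: sL; rewrite !size_cat /= addnS => -[].
Qed.

Lemma dedup ws : exists ss rest, [/\ Permutation ws (ss ++ rest), pw ss &
  forall w, List.In w ws -> exists s, List.In s ss /\ iso w s].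
Proof.
elim: ws => [|w ws [ss [rest [p pss H]]]]; first by exists [::], [::].
case: (classic (exists s, List.In s ss /\ iso w s)) => [[s0 hs0]|nh].
  exists ss, (w :: rest); split => //.
    apply: Permutation_trans (Permutation.perm_skip w p) _.
    exact: Permutation_sym (perm_mid w ss rest).
  by move=> z [<-|iz]; [exists s0 | apply: H].
exists (w :: ss), rest; split => //.
- exact: Permutation.perm_skip.
- by split => // z iz h; apply: nh; exists z.
move=> z [<-|iz]; first by exists w; split; [left | apply: iso_refl].
by case: (H z iz) => s0 [i0 h0]; exists s0; split => //; right.
Qed.

Lemma partition (P : rp -> Prop) l : exists a1 b1, [/\ Permutation l (a1 ++ b1),
  (forall x, List.In x a1 -> P x) & (forall x, List.In x b1 -> ~ P x)].
Proof.
elim: l => [|x l [a1 [b1 [p Ha Hb]]]]; first by exists [::], [::].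
case: (classic (P x)) => Px.
  exists (x :: a1), b1; split => //; first exact: Permutation.perm_skip.
  by move=> z [<-|iz] //; apply: Ha.
exists a1, (x :: b1); split => //.
  apply: Permutation_trans (Permutation.perm_skip x p) _.
  exact: Permutation_sym (perm_mid x a1 b1).
by move=> z [<-|iz] //; apply: Hb.
Qed.

Lemma summand_in x l : List.In x l -> summand x (bigl l).
Proof.
move=> H; case: (split_in H) => l1 [l2 ->]; exists (bigl (l1 ++ l2)).
exact: bigl_perm (perm_mid x l1 l2).
Qed.

Lemma nonzero_summand (U X : rp) : summand U X -> rep_nonzero U -> rep_nonzero X.
Proof.
case=> W h; rewrite !nonzeroP (Ndim_iso h) Ndim_rsum => H.
exact: leq_trans H (leq_addr _ _).
Qed.


Lemma summand_bigl_id (U : rp) ws : indec U -> summand U (bigl ws) ->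
  exists w, List.In w ws /\ summand U w.
Proof.
move=> iU h; have := @summand_bigl U rp id ws iU; rewrite map_id => /(_ h).
case=> w [ws' [p hw]]; exists w; split => //.
by apply: perm_in (Permutation_sym p) _; left.
Qed.

Lemma summand_bigl_iso (U : rp) ws : indec U -> (forall w, List.In w ws -> indec w) ->
  summand U (bigl ws) -> exists w, List.In w ws /\ iso U w.
Proof.
move=> iU H h; case: (summand_bigl_id iU h) => w [iw hw].
by exists w; split => //; apply: summand_indec => //; apply: H.
Qed.

Variable qa : qaut s t.
Local Notation tw := (twist qa).
Definition twn n (X : rp) := iter n tw X.

Lemma twn_iso n (X Y : rp) : iso X Y -> iso (twn n X) (twn n Y).
Proof. by elim: n => //= n IH h; apply: tw_iso; apply: IH. Qed.

Lemma twn_indec n (U : rp) : indec U -> indec (twn n U).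
Proof. by elim: n => //= n IH h; apply: tw_indec; apply: IH. Qed.

Lemma twn_summand n (U X : rp) : summand U X -> summand (twn n U) (twn n X).
Proof. by elim: n => //= n IH h; apply: tw_summand; apply: IH. Qed.

Lemma twn_ii n (Y : rp) : ii_rep qa Y -> iso (twn n Y) Y.
Proof.
move=> h; elim: n => [|n IH] /=; first exact: iso_refl.
exact: iso_trans (tw_iso qa IH) h.
Qed.

Lemma pw_map_tw l : pw l -> pw (map tw l).
Proof.
elim: l => //= x l IH [H pl]; split; last exact: IH.
move=> z iz; case: (in_mapP iz) => y [-> iy] h; apply: (H y iy).
exact: tw_refl h.
Qed.

Lemma closed_split (y : rp) a1 b1 : ii_indec qa y -> iso y (bigl (a1 ++ b1)) -> a1 <> [::] ->
  (forall x, List.In x (a1 ++ b1) -> indec x) -> pw a1 ->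
  (forall x, List.In x a1 -> exists x', List.In x' a1 /\ iso (tw x) x') -> b1 = [::].
Proof.
case=> nzy iiy dy h na1 ind pa cl.
have ia1 x : List.In x a1 -> indec x by move=> ?; apply: ind; apply/in_cat; left.
have hy : iso y (rsum (bigl a1) (bigl b1)) := iso_trans h (bigl_cat _ _).
have iiA : iso (tw (bigl a1)) (bigl a1).
  apply: iso_trans (tw_bigl _ _) _; apply: match_s; first exact: pw_map_tw.
    by rewrite size_map.
  by move=> z iz; case: (in_mapP iz) => x [-> ix]; apply: cl.
have iiB : iso (tw (bigl b1)) (bigl b1).
  apply: (@canc_list a1) => //.
  apply: iso_trans (iso_sym (iso_trans (tw_rsum _ _ _) (rsum_iso iiA (iso_refl _)))) _.
  apply: iso_trans (tw_iso qa (iso_sym hy)) _.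
  exact: iso_trans iiy hy.
case: b1 => // z b1 in ind h hy iiB *; exfalso; apply: dy.
exists (bigl a1), (bigl (z :: b1)); split => //.
- case: a1 na1 ia1 {ind h hy pa cl iiA} => // x a1 _ ia1.
  apply: (@nonzero_summand x); first by apply: summand_in; left.
  by apply: indec_nonzero; apply: ia1; left.
- apply: (@nonzero_summand z); first by apply: summand_in; left.
  by apply: indec_nonzero; apply: ind; apply/in_cat; right; left.
Qed.

Lemma normal_form (y : rp) : ii_indec qa y -> exists ss, [/\ iso y (bigl ss),
  (forall x, List.In x ss -> indec x), pw ss &
  (forall x, List.In x ss -> exists x', List.In x' ss /\ iso (tw x) x')].
Proof.
move=> iy; case: (exist_dec y) => ws [iws hws].
case: (dedup ws) => ss [rest [p pss Hs]].
have ssws x : List.In x ss -> List.In x ws.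
  by move=> ix; apply: perm_in (Permutation_sym p) _; apply/in_cat; left.
have ind x : List.In x (ss ++ rest) -> indec x.
  by move=> ix; apply: iws; apply: perm_in (Permutation_sym p) ix.
have cl x : List.In x ss -> exists x', List.In x' ss /\ iso (tw x) x'.
  move=> ix; have ix' := ssws x ix.
  have sx : summand (tw x) (bigl ws).
    have sxy : summand x y := summand_iso (iso_sym hws) (summand_in ix').
    apply: summand_iso (tw_summand qa sxy).
    by case: iy => _ iiy _; apply: iso_trans iiy hws.
  case: (summand_bigl_iso (tw_indec qa (iws x ix')) iws sx) => w [iw hw].
  case: (Hs w iw) => x' [ix'' hx']; exists x'; split => //.
  exact: iso_trans hw hx'.
have hy : iso y (bigl (ss ++ rest)) := iso_trans hws (bigl_perm p).
have nss : ss <> [::].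
  move=> ss0; case: iy => nzy _ _; case E: ws => [|w ws'].
    by move: nzy; rewrite nonzeroP (Ndim_iso hws) E /Ndim big1.
  have iw : List.In w ws by rewrite E; left.
  by case: (Hs w iw) => x [ix _]; rewrite ss0 in ix.
have r0 := closed_split iy hy nss ind pss cl.
exists ss; split => // [|x ix]; first by move: hy; rewrite r0 cats0.
by apply: ind; apply/in_cat; left.
Qed.


Lemma orbit (y U : rp) : ii_indec qa y -> indec U -> summand U y -> exists ss,
  [/\ iso y (bigl ss), (forall x, List.In x ss -> indec x), pw ss &
      (forall x, List.In x ss -> exists n, iso x (twn n U))].
Proof.
move=> iy iU sU; case: (normal_form iy) => ss [hy ind pss cl].
pose P x := exists n, iso x (twn n U).
case: (partition P ss) => a1 [b1 [p Ha Hb]].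
have hy' : iso y (bigl (a1 ++ b1)) := iso_trans hy (bigl_perm p).
have ind' x : List.In x (a1 ++ b1) -> indec x.
  by move=> ix; apply: ind; apply: perm_in (Permutation_sym p) ix.
have pa : pw a1 := pw_app_l (pw_perm p pss).
have ina x : List.In x a1 -> List.In x ss.
  by move=> ix; apply: perm_in (Permutation_sym p) _; apply/in_cat; left.
have toa x : List.In x ss -> P x -> List.In x a1.
  move=> ix Px; case/in_cat: (perm_in p ix) => // ib.
  by case: (Hb x ib Px).
have cl' x : List.In x a1 -> exists x', List.In x' a1 /\ iso (tw x) x'.
  move=> ix; case: (cl x (ina x ix)) => x' [ix' h']; exists x'; split => //.
  apply: toa => //; case: (Ha x ix) => n hn; exists n.+1.
  exact: iso_trans (iso_sym h') (tw_iso qa hn).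
have na1 : a1 <> [::].
  case: (summand_bigl_iso iU ind (summand_iso hy sU)) => w [iw hw] a0.
  have : List.In w a1 by apply: toa => //; exists 0%N; apply: iso_sym.
  by rewrite a0.
have b0 := closed_split iy hy' na1 ind' pa cl'.
exists ss; split => // x ix; apply: Ha.
by move: (perm_in p ix); rewrite b0 cats0.
Qed.

Lemma shared (y z U : rp) : ii_indec qa y -> ii_indec qa z -> indec U ->
  summand U y -> summand U z -> iso y z.
Proof.
move=> iy iz iU sy sz.
have hit w ss : ii_indec qa w -> iso w (bigl ss) -> (forall x, List.In x ss -> indec x) ->
    summand U w -> forall n, exists s, List.In s ss /\ iso (twn n U) s.
  move=> [_ iiw _] hw ind sw n.
  have s1 : summand (twn n U) (bigl ss).
    apply: summand_iso (twn_summand n sw).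
    exact: iso_trans (twn_ii n iiw) hw.
  exact: summand_bigl_iso (twn_indec n iU) ind s1.
case: (orbit iy iU sy) => ssy [hy indy py oy].
case: (orbit iz iU sz) => ssz [hz indz pz oz].
have d1 x : List.In x ssy -> exists w, List.In w ssz /\ iso x w.
  move=> ix; case: (oy x ix) => n hn; case: (hit z ssz iz hz indz sz n) => w [iw hw].
  by exists w; split => //; apply: iso_trans hn hw.
have d2 x : List.In x ssz -> exists w, List.In w ssy /\ iso x w.
  move=> ix; case: (oz x ix) => n hn; case: (hit y ssy iy hy indy sy n) => w [iw hw].
  by exists w; split => //; apply: iso_trans hn hw.
have sz_eq : size ssy = size ssz.
  by apply/eqP; rewrite eqn_leq (len_le py d1) (len_le pz d2).
apply: iso_trans hy (iso_trans (match_s py sz_eq d1) (iso_sym hz)).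
Qed.

Lemma exch (y W : rp) (I : Type) (Z : I -> rp) js : ii_indec qa y ->
  (forall j, ii_indec qa (Z j)) -> iso (rsum y W) (bigl (map Z js)) ->
  exists j js', [/\ Permutation js (j :: js'), iso y (Z j) & iso W (bigl (map Z js'))].
Proof.
move=> iy iZ h.
case: (exist_dec y) => us [ius hus].
case: us ius hus => [|u us'] ius hus.
  by case: iy => nzy _ _; exfalso; move: nzy; rewrite nonzeroP (Ndim_iso hus) /Ndim big1.
have iu : indec u by apply: ius; left.
have suy : summand u y by apply: summand_iso (iso_sym hus) (summand_rsum _ _).
have su : summand u (bigl (map Z js)).
  exact: summand_iso h (summand_trans suy (summand_rsum _ _)).
case: (summand_bigl iu su) => j [js' [p sj]].
have hyz : iso y (Z j) := shared iy (iZ j) iu suy sj.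
exists j, js'; split => //.
apply: (@canc_list (u :: us')) => //.
apply: iso_trans (rsum_iso (iso_sym hus) (iso_refl _)) _.
apply: iso_trans (rsum_iso hus (iso_refl _)); apply: iso_trans h _.
apply: iso_trans (bigl_perm (_ : Permutation (map Z js) (map Z (j :: js')))) _.
  by rewrite -!mapE; apply: Permutation_map.
exact: rsum_iso (iso_sym hyz) (iso_refl _).
Qed.

Lemma uniq_ii ys (I : Type) (Z : I -> rp) js : (forall y, List.In y ys -> ii_indec qa y) ->
  (forall j, ii_indec qa (Z j)) -> iso (bigl ys) (bigl (map Z js)) ->
  exists js', Permutation js js' /\ List.Forall2 (fun y j => iso y (Z j)) ys js'.
Proof.
elim: ys js => [|y ys IH] js iys iZ h.
  have e := bigl_nil_iso _ (iso_sym h).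
  case: js e h => [|j js] e h; first by exists [::]; split => //; apply: Permutation_refl.
  exfalso; have : map Z (j :: js) = [::].
    apply: e => x ix; case: (in_mapP ix) => j0 [-> _].
    by case: (iZ j0).
  by [].
case: (exch (iys y (or_introl erefl)) iZ h) => j [js' [p hy hW]].
case: (IH js' (fun x ix => iys x (or_intror ix)) iZ hW) => js'' [p' f2].
exists (j :: js''); split; last by constructor.
exact: Permutation_trans p (Permutation.perm_skip j p').
Qed.

Lemma exist_ii (X : rp) : ii_rep qa X ->
  exists ys, (forall y, List.In y ys -> ii_indec qa y) /\ iso X (bigl ys).
Proof.
move: {2}(Ndim X) (leqnn (Ndim X)) => N; elim: N X => [|N IH] X hN iiX.
  exists [::]; split => //; apply: zero_Ndim; apply/eqP; rewrite -leqn0 //.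
case: (classic (rep_nonzero X)) => nz; last first.
  exists [::]; split => //; apply: zero_Ndim; apply/eqP; rewrite eqn_leq leq0n andbT.
  by rewrite leqNgt; apply/negP => /nonzeroP.
case: (classic (ii_indec qa X)) => iX.
  exists [:: X]; split; first by move=> u [<-|].
  exact: iso_sym (rsum0r X).
have [Y [Z [nY nZ iY iZ h]]] : exists Y Z : rp,
    [/\ rep_nonzero Y, rep_nonzero Z, ii_rep qa Y, ii_rep qa Z & iso X (rsum Y Z)].
  by apply: NNPP => H; apply: iX; split.
have dX := Ndim_iso h; rewrite Ndim_rsum in dX.
move/nonzeroP: nY => nY; move/nonzeroP: nZ => nZ.
case: (IH Y) => // [|ys [iys hy]]; first by rewrite -ltnS (leq_trans _ hN) // dX -addn1 leq_add2l.
case: (IH Z) => // [|zs [izs hz]]; first by rewrite -ltnS (leq_trans _ hN) // dX -add1n leq_add2r.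
exists (ys ++ zs); split.
  by move=> u Hu; case/in_cat: Hu => ?; [apply: iys | apply: izs].
apply: iso_trans h (iso_trans (rsum_iso hy hz) (iso_sym (bigl_cat _ _))).
Qed.

End KRS.

Lemma Permutation_perm (T : eqType) (s1 s2 : seq T) : Permutation s1 s2 -> perm_eq s1 s2.
Proof.
elim=> [|x l l' _ IH|x y l|l l' l'' _ IH1 _ IH2].
- exact: perm_refl.
- by rewrite perm_cons.
- by apply/permP => q /=; rewrite addnCA.
- exact: perm_trans IH1 IH2.
Qed.

Lemma F2_nth (T U : Type) (R : T -> U -> Prop) l1 l2 x0 y0 :
  List.Forall2 R l1 l2 -> forall i, (i < size l1)%N -> R (nth x0 l1 i) (nth y0 l2 i).
Proof. by elim=> // x y l1' l2' r _ IH [|i] //= /IH. Qed.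

Lemma F2_size (T U : Type) (R : T -> U -> Prop) l1 l2 :
  List.Forall2 R l1 l2 -> size l1 = size l2.
Proof. by elim=> //= x y l1' l2' _ _ ->. Qed.

Lemma In_nth (T : Type) (x0 : T) s i : (i < size s)%N -> List.In (nth x0 s i) s.
Proof. by elim: s i => // x s IH [|i] /=; [left | move/IH; right]. Qed.

Theorem lemma3p1 (k : fieldType) (V A : finType) (s t : A -> V)
    (a : qaut s t) (X : rep s t k) :
  ii_rep a X ->
  (exists (m : nat) (Y : 'I_m -> rep s t k),
      (forall i, ii_indec a (Y i)) /\ rep_iso X (bigsum Y)) /\
  (forall (m n : nat) (Y : 'I_m -> rep s t k) (Z : 'I_n -> rep s t k),
      (forall i, ii_indec a (Y i)) -> (forall j, ii_indec a (Z j)) ->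
      rep_iso X (bigsum Y) -> rep_iso X (bigsum Z) ->
      m = n /\ exists sigma : 'I_m -> 'I_n,
        bijective sigma /\ forall i, rep_iso (Y i) (Z (sigma i))).
Proof.
move=> iiX; split.
  case: (exist_ii iiX) => ys [iys h].
  exists (size ys), (fun i => nth (rzero s t k) ys i); split.
    by move=> i; apply: iys; apply: In_nth.
  have E : [seq nth (rzero s t k) ys i | i : 'I_(size ys) <- enum 'I_(size ys)] = ys.
    by rewrite -[RHS](mkseq_nth (rzero s t k)) /mkseq -val_enum_ord -map_comp.
  by rewrite /bigsum E.
move=> m n Y Z iY iZ hY hZ.
have h : rep_iso (bigl (map Y (enum 'I_m))) (bigl (map Z (enum 'I_n))).
  exact: iso_trans (iso_sym hY) hZ.
have iys y : List.In y (map Y (enum 'I_m)) -> ii_indec a y.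
  by move=> iy; case: (in_mapP iy) => i [-> _].
case: (uniq_ii iys iZ h) => js [p f2].
have mn : m = n.
  have := F2_size f2; rewrite size_map size_enum_ord => ->.
  by rewrite -(perm_size p) size_enum_ord.
subst n; split => //.
have sjs : size js = m by rewrite -(F2_size f2) size_map size_enum_ord.
have ujs : uniq js by rewrite -(perm_uniq (Permutation_perm p)) enum_uniq.
exists (fun i => nth i js i); split.
  apply: injF_bij => i j e.
  have e' : nth i js i = nth i js j by rewrite e (set_nth_default i) // sjs.
  by apply/val_inj/eqP; rewrite -(@nth_uniq _ i js) ?sjs ?ltn_ord // e'.
move=> i; have := F2_nth (rzero s t k) i f2 (i := i).
rewrite size_map size_enum_ord ltn_ord => /(_ isT).
by rewrite (nth_map i) ?size_enum_ord // nth_ord_enum.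
Qed.
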